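(* Let $\langle a\rangle$ and $\langle b\rangle$ be cyclic groups of orders $2^{\alpha}$ and $2^{\beta}$ respectively, with $\alpha\geq\beta\geq 1$, let $G=\langle a\rangle\amalg^{\mathfrak{N}_3}\langle b\rangle$ be their $3$-nilpotent product, and let $\gamma$ be an integer with $1\leq\gamma<\beta$. Let $N$ be the (central) subgroup of $G$ generated by $[a,b,a]^{2^{\gamma}}=[a,b]^{-2^{\gamma+1}}[a^2,b]^{2^{\gamma}}$ and $[a,b,b]^{2^{\gamma}}=[a,b]^{-2^{\gamma+1}}[a,b^2]^{2^{\gamma}}$, and let $K=G/N$. Then every element of $K$ can be written uniquely as $k=a^rb^s[a,b]^t[a,b,a]^u[a,b,b]^v$ (writing $a$ for $aN$, etc.), where $r$ is unique modulo $2^{\alpha}$, $s$ and $t$ are unique modulo $2^{\beta}$, and $u$ and $v$ are unique modulo $2^{\gamma}$.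
   Context: For cyclic groups $A_1,A_2$, their $3$-nilpotent product $A_1\amalg^{\mathfrak{N}_3}A_2$ is $F/F_4$, where $F=A_1*A_2$ is the free product and $F_4$ is the fourth term of the lower central series of $F$. Commutators are $[x,y]=x^{-1}y^{-1}xy$, left-normed: $[x,y,z]=[[x,y],z]$. *)

(* Defs.v *)
From HB Require Import structures.
From mathcomp Require Import all_boot all_fingroup all_solvable.
Set Implicit Arguments. Unset Strict Implicit. Unset Printing Implicit Defensive.
Import GroupScope.
Local Open Scope group_scope.

(* [is_nil3_product G a b m n] : G (generated by a, b) is the 3-nilpotent
   product <a> ∐^{N_3} <b> of cyclic groups of orders m and n, i.e.
   (C_m * C_n) / gamma_4(C_m * C_n), characterised by its universal property:
   G is generated by a and b, a^m = b^n = 1, gamma_4(G) = 1, and for every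
   (finite) group in which elements x, y satisfy x^m = y^n = 1 and generate a
   subgroup of class <= 3 there is a homomorphism G -> that group sending
   a |-> x, b |-> y. *)
Definition is_nil3_product (gT : finGroupType) (G : {group gT}) (a b : gT)
    (m n : nat) : Prop :=
  [/\ G :=: <<[set a; b]>>, a ^+ m = 1, b ^+ n = 1, 'L_4(G) = 1 &
      forall (hT : finGroupType) (x y : hT),
        x ^+ m = 1 -> y ^+ n = 1 -> 'L_4(<<[set x; y]>>) = 1 ->
        exists f : {morphism G >-> hT}, f a = x /\ f b = y].

(* Main.v *)
Require Import Defs.
From HB Require Import structures.
From mathcomp Require Import all_boot all_fingroup all_solvable.
From mathcomp Require Import all_order all_algebra.
From mathcomp Require Import ring.
Set Implicit Arguments. Unset Strict Implicit. Unset Printing Implicit Defensive.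
Import GRing.Theory.
Import GroupScope.
Local Open Scope group_scope.

Section PermModel.
Variables P Q R : nat.
Hypotheses (hP : 1 < P) (hQ : 1 < Q) (hR : 1 < R).
Hypotheses (RQ : R %| Q) (QP : Q %| P) (RbP : R %| 'C(P, 2)) (RbQ : R %| 'C(Q, 2)).

Local Open Scope ring_scope.

Lemma natr0_dvd M (hM : (1 < M)%N) n : (M %| n)%N -> (n%:R : 'Z_M) = 0.
Proof. move=> /eqP Hd; apply: val_inj => /=; by rewrite val_Zp_nat. Qed.

Definition cR (x : 'Z_Q) : 'Z_R := (x : nat)%:R.

Lemma cR_nat n : cR n%:R = n%:R.
Proof.
rewrite /cR val_Zp_nat // {2}(divn_eq n Q) natrD natrM.
by rewrite (natr0_dvd hR RQ) mulr0 add0r.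
Qed.

Lemma cRE (x : 'Z_Q) : x = (x : nat)%:R.
Proof. by rewrite natr_Zp. Qed.

Lemma cRD x y : cR (x + y) = cR x + cR y.
Proof. by rewrite [x]cRE [y]cRE -natrD !cR_nat natrD. Qed.
Lemma cRM x y : cR (x * y) = cR x * cR y.
Proof. by rewrite [x]cRE [y]cRE -natrM !cR_nat natrM. Qed.
Lemma cR0 : cR 0 = 0. Proof. by []. Qed.
Lemma cR1 : cR 1 = 1. Proof. exact: (cR_nat 1). Qed.
Lemma cRN x : cR (- x) = - cR x.
Proof. by apply/eqP; rewrite -subr_eq0 opprK -cRD addNr cR0. Qed.
Lemma cRB x y : cR (x - y) = cR x - cR y.
Proof. by rewrite cRD cRN. Qed.

Definition T := ('Z_P * 'Z_Q * 'Z_Q * 'Z_R * 'Z_R * 'Z_R)%type.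

Definition fX (p : T) : T := let: (r, s, t, u, v, w) := p in
  (r + 1, s, t - s, u + cR t, v - w, w).
Definition fXi (p : T) : T := let: (r, s, t, u, v, w) := p in
  (r - 1, s, t + s, u - cR (t + s), v + w, w).
Definition fY (p : T) : T := let: (r, s, t, u, v, w) := p in
  (r, s + 1, t, u, v + cR t, w + cR s).
Definition fYi (p : T) : T := let: (r, s, t, u, v, w) := p in
  (r, s - 1, t, u, v - cR t, w - cR (s - 1)).
Definition fC (p : T) : T := let: (r, s, t, u, v, w) := p in (r, s, t + 1, u, v, w).
Definition fCi (p : T) : T := let: (r, s, t, u, v, w) := p in (r, s, t - 1, u, v, w).
Definition fD (p : T) : T := let: (r, s, t, u, v, w) := p in (r, s, t, u + 1, v, w).
Definition fDi (p : T) : T := let: (r, s, t, u, v, w) := p in (r, s, t, u - 1, v, w).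
Definition fE (p : T) : T := let: (r, s, t, u, v, w) := p in (r, s, t, u, v + 1, w).
Definition fEi (p : T) : T := let: (r, s, t, u, v, w) := p in (r, s, t, u, v - 1, w).

Ltac tcase := let r := fresh "r" in let s := fresh "s" in let t := fresh "t" in
  let u := fresh "u" in let v := fresh "v" in let w := fresh "w" in
  case=> [[[[[r s] t] u] v] w].

Lemma fXK : cancel fX fXi.
Proof. tcase; rewrite /= cRD cRB; congr (_, _, _, _, _, _); ring. Qed.
Lemma fYK : cancel fY fYi.
Proof. tcase; rewrite /= addrK; congr (_, _, _, _, _, _); ring. Qed.
Lemma fCK : cancel fC fCi.
Proof. tcase; rewrite /=; congr (_, _, _, _, _, _); ring. Qed.
Lemma fDK : cancel fD fDi.
Proof. tcase; rewrite /=; congr (_, _, _, _, _, _); ring. Qed.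
Lemma fEK : cancel fE fEi.
Proof. tcase; rewrite /=; congr (_, _, _, _, _, _); ring. Qed.

Definition X : {perm T} := perm (can_inj fXK).
Definition Y : {perm T} := perm (can_inj fYK).
Definition Cp : {perm T} := perm (can_inj fCK).
Definition Dp : {perm T} := perm (can_inj fDK).
Definition Ep : {perm T} := perm (can_inj fEK).

Local Open Scope group_scope.

Lemma XY_comm : [~ X, Y] = Cp.
Proof.
apply: (@mulgI _ (Y * X)); rewrite -commgC; apply/permP; tcase.
rewrite !permM !permE /= ?cRD ?cRN ?cRB ?cR_nat ?cR1; congr (_, _, _, _, _, _); ring.
Qed.

Lemma CX_comm : [~ Cp, X] = Dp.
Proof.
apply: (@mulgI _ (X * Cp)); rewrite -commgC; apply/permP; tcase.
rewrite !permM !permE /= ?cRD ?cRN ?cRB ?cR_nat ?cR1; congr (_, _, _, _, _, _); ring.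
Qed.

Lemma CY_comm : [~ Cp, Y] = Ep.
Proof.
apply: (@mulgI _ (Y * Cp)); rewrite -commgC; apply/permP; tcase.
rewrite !permM !permE /= ?cRD ?cRN ?cRB ?cR_nat ?cR1; congr (_, _, _, _, _, _); ring.
Qed.

Lemma DX : commute Dp X.
Proof. apply/permP; tcase; rewrite !permM !permE /=; congr (_, _, _, _, _, _); ring. Qed.
Lemma DY : commute Dp Y.
Proof. apply/permP; tcase; rewrite !permM !permE /=; congr (_, _, _, _, _, _); ring. Qed.
Lemma EX : commute Ep X.
Proof. apply/permP; tcase; rewrite !permM !permE /=; congr (_, _, _, _, _, _); ring. Qed.
Lemma EY : commute Ep Y.
Proof. apply/permP; tcase; rewrite !permM !permE /=; congr (_, _, _, _, _, _); ring. Qed.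

Local Open Scope ring_scope.
Lemma Xn n r s t u v w : (X ^+ n)%g (r, s, t, u, v, w) =
  (r + n%:R, s, t - n%:R * s, u + n%:R * cR t - ('C(n, 2))%:R * cR s,
   v - n%:R * w, w).
Proof.
elim: n => [|n IH].
  by rewrite expg0 perm1 (_ : 'C(0, 2) = 0%N) //; congr (_, _, _, _, _, _); ring.
rewrite expgSr permM IH permE /= ?cRD ?cRN ?cRB ?cRM ?cR_nat ?cR1.
rewrite binS bin1 natrD mulrS; congr (_, _, _, _, _, _); ring.
Qed.

Lemma Yn n r s t u v w : (Y ^+ n)%g (r, s, t, u, v, w) =
  (r, s + n%:R, t, u, v + n%:R * cR t, w + n%:R * cR s + ('C(n, 2))%:R).
Proof.
elim: n => [|n IH].
  by rewrite expg0 perm1 (_ : 'C(0, 2) = 0%N) //; congr (_, _, _, _, _, _); ring.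
rewrite expgSr permM IH permE /= ?cRD ?cRN ?cRB ?cRM ?cR_nat ?cR1.
rewrite binS bin1 natrD mulrS; congr (_, _, _, _, _, _); ring.
Qed.

Lemma Cn n r s t u v w : (Cp ^+ n)%g (r, s, t, u, v, w) = (r, s, t + n%:R, u, v, w).
Proof.
elim: n => [|n IH]; first by rewrite expg0 perm1 /= addr0.
by rewrite expgSr permM IH permE /= mulrS; congr (_, _, _, _, _, _); ring.
Qed.
Lemma Dn n r s t u v w : (Dp ^+ n)%g (r, s, t, u, v, w) = (r, s, t, u + n%:R, v, w).
Proof.
elim: n => [|n IH]; first by rewrite expg0 perm1 /= addr0.
by rewrite expgSr permM IH permE /= mulrS; congr (_, _, _, _, _, _); ring.
Qed.
Lemma En n r s t u v w : (Ep ^+ n)%g (r, s, t, u, v, w) = (r, s, t, u, v + n%:R, w).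
Proof.
elim: n => [|n IH]; first by rewrite expg0 perm1 /= addr0.
by rewrite expgSr permM IH permE /= mulrS; congr (_, _, _, _, _, _); ring.
Qed.

Lemma XP : (X ^+ P)%g = 1%g.
Proof.
apply/permP; tcase; rewrite Xn perm1.
have RP : (R %| P)%N by apply: dvdn_trans QP.
rewrite (natr0_dvd hP (dvdnn P)) (natr0_dvd hQ QP) (natr0_dvd hR RP).
rewrite (natr0_dvd hR RbP); congr (_, _, _, _, _, _); ring.
Qed.

Lemma YQ : (Y ^+ Q)%g = 1%g.
Proof.
apply/permP; tcase; rewrite Yn perm1.
rewrite (natr0_dvd hQ (dvdnn Q)) (natr0_dvd hR RQ) (natr0_dvd hR RbQ).
congr (_, _, _, _, _, _); ring.
Qed.

Lemma DR : (Dp ^+ R)%g = 1%g.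
Proof. by apply/permP; tcase; rewrite Dn perm1 (natr0_dvd hR (dvdnn R)) addr0. Qed.
Lemma ER : (Ep ^+ R)%g = 1%g.
Proof. by apply/permP; tcase; rewrite En perm1 (natr0_dvd hR (dvdnn R)) addr0. Qed.

Definition p0 : T := (0, 0, 0, 0, 0, 0).

Lemma nf_eval r s t u v :
  (X ^+ r * Y ^+ s * Cp ^+ t * Dp ^+ u * Ep ^+ v)%g p0 =
  (r%:R, s%:R, t%:R, u%:R, v%:R, ('C(s, 2))%:R).
Proof.
rewrite !permM Xn Yn Cn Dn En ?cRD ?cRN ?cRB ?cRM ?cR0.
congr (_, _, _, _, _, _); ring.
Qed.

Lemma Zp_inj M (hM : (1 < M)%N) m n : (m%:R : 'Z_M) = n%:R -> m = n %[mod M].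
Proof. by move/(congr1 val) => /=; rewrite !val_Zp_nat. Qed.

End PermModel.

Lemma gen2_sub (hT : finGroupType) (x y : hT) (K : {group hT}) :
  x \in K -> y \in K -> <<[set x; y]>> \subset K.
Proof.
move=> xK yK; rewrite gen_subG; apply/subsetP => z; rewrite !inE.
by case/orP => /eqP ->.
Qed.

Lemma cent_gen2 (hT : finGroupType) (x y z : hT) :
  commute z x -> commute z y -> z \in 'C(<<[set x; y]>>).
Proof.
move=> zx zy; rewrite -sub_cent1; apply: gen2_sub; apply/cent1P; exact: commute_sym.
Qed.

Lemma class2 (hT : finGroupType) (x y : hT) :
  commute [~ x, y] x -> commute [~ x, y] y -> 'L_3(<<[set x; y]>>) = 1.
Proof.
move=> cx cy.
have E : <<[set x; y]>> = <[x]> <*> <[y]> by rewrite joing_idl joing_idr.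
have cC : [~ x, y] \in 'C(<[x]> <*> <[y]>) by rewrite -E; exact: cent_gen2.
have := der1_joing_cycles cC; rewrite -E => D1.
rewrite lcnSn lcnSn lcn1 -derg1 D1; apply/commG1P.
by rewrite cycle_subG; exact: cent_gen2.
Qed.

Lemma class3 (hT : finGroupType) (x y : hT) :
  commute [~ x, y, x] x -> commute [~ x, y, x] y ->
  commute [~ x, y, y] x -> commute [~ x, y, y] y ->
  'L_4(<<[set x; y]>>) = 1.
Proof.
move=> dx dy ex ey.
set H := <<[set x; y]>>.
set Z := <<[set [~ x, y, x]; [~ x, y, y]]>>.
have cZH : Z \subset 'C(H).
  by apply: gen2_sub; apply: cent_gen2.
have nZH : H \subset 'N(Z) by rewrite cents_norm // centsC.
have xH : x \in H by rewrite mem_gen // !inE eqxx.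
have yH : y \in H by rewrite mem_gen // !inE eqxx orbT.
have xN : x \in 'N(Z) by apply: (subsetP nZH).
have yN : y \in 'N(Z) by apply: (subsetP nZH).
have cN : [~ x, y] \in 'N(Z) by rewrite groupR.
have L3 : 'L_3(H) \subset Z.
  rewrite -quotient_sub1; last by apply: subset_trans nZH; apply: lcn_sub.
  rewrite /quotient morphim_lcn //= -/(quotient H Z) quotient_gen; last first.
    by apply: subset_trans nZH; apply: subset_gen.
  rewrite quotientU !quotient_set1 // class2 //.
    apply/commgP; rewrite -!morphR //= coset_id //.
    by rewrite mem_gen // !inE eqxx.
  apply/commgP; rewrite -!morphR //= coset_id //.
  by rewrite mem_gen // !inE eqxx orbT.
apply/eqP; rewrite -subG1 /=. rewrite lcnSn.
apply: subset_trans (commgSS L3 (subxx H)) _.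
by have /commG1P -> := cZH.
Qed.

Section Coll.
Variables (gT : finGroupType) (x y : gT).
Let c := [~ x, y].
Let d := [~ c, x].
Let e := [~ c, y].
Hypotheses (dx : commute d x) (dy : commute d y) (ex : commute e x) (ey : commute e y).

Lemma central_c z : commute z x -> commute z y -> commute z c.
Proof.
move=> zx zy; rewrite /c /commg /conjg.
by apply: commuteM; [apply: commuteV | apply: commuteM; [apply: commuteV|apply: commuteM]].
Qed.

Let dc : commute d c := central_c dx dy.
Let ec : commute e c := central_c ex ey.
Let de : commute d e.
Proof.
rewrite /e /commg /conjg.
by apply: commuteM; [apply: commuteV | apply: commuteM; [apply: commuteV|apply: commuteM]].
Qed.

Lemma cxn (t : nat) : c ^+ t * x = x * c ^+ t * d ^+ t.
Proof. rewrite commgC; congr (_ * _); apply: commXg; exact: commute_sym. Qed.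

Lemma cyn (t : nat) : c ^+ t * y = y * c ^+ t * e ^+ t.
Proof. rewrite commgC; congr (_ * _); apply: commXg; exact: commute_sym. Qed.

Lemma conj_fix (z g : gT) : commute z g -> z ^ g = z.
Proof. by move=> zg; rewrite /conjg zg mulKg. Qed.

Lemma comm_xyn n : [~ x, y ^+ n] = c ^+ n * e ^+ 'C(n, 2).
Proof.
elim: n => [|n IH]; first by rewrite !expg0 mulg1 commg1.
rewrite expgSr commgMJ IH conjMg !conjXg (conj_fix ey) conjg_mulR -/c -/e.
rewrite expgMn; last by apply: commute_sym.
rewrite binS bin1 !mulgA -expgS -mulgA -expgD addnC.
by [].
Qed.

Lemma cmys (m s : nat) : c ^+ m * y ^+ s = y ^+ s * c ^+ m * e ^+ (m * s).
Proof.
rewrite commgC; congr (_ * _); apply: commXXg; first exact: commute_sym.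
exact: commute_sym.
Qed.

Lemma yxs s : exists i j, y ^+ s * x = x * y ^+ s * c ^+ i * e ^+ j.
Proof.
elim: s => [|s [i [j IH]]]; first by exists 0, 0; rewrite !expg0 !mulg1 mul1g.
set m := #[c].-1.
exists (m + i), (m * s + j).
rewrite expgS -mulgA IH !mulgA (commgC y x) -invg_comm invg_expg -/c -/m.
rewrite -(mulgA _ (c ^+ m)) cmys !mulgA -(mulgA x y) -expgS.
rewrite -!(mulgA (x * y ^+ s.+1 * c ^+ m)).
rewrite (commuteX2 _ _ ec) !mulgA -(mulgA _ (c ^+ m) (c ^+ i)) -expgD.
by rewrite -(mulgA _ (e ^+ (m * s))) -expgD.
Qed.

Lemma cXl (a b : gT) n : commute a b -> a ^+ n * b = b * a ^+ n.
Proof. by move=> ab; apply: commute_sym; apply: commuteX; apply: commute_sym. Qed.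

Definition nf r s t u v := x ^+ r * y ^+ s * c ^+ t * d ^+ u * e ^+ v.

Lemma nf_y r s t u v : nf r s t u v * y = nf r s.+1 t u (t + v).
Proof.
rewrite /nf -!mulgA (cXl _ ey) (mulgA (d ^+ u)) (cXl _ dy).
rewrite !mulgA -(mulgA _ (c ^+ t) y) cyn !mulgA -(mulgA _ (y ^+ s) y) -expgSr.
rewrite -(mulgA _ (e ^+ t) (d ^+ u)) (commuteX2 _ _ (commute_sym de)) !mulgA.
by rewrite -(mulgA _ (e ^+ t) (e ^+ v)) -expgD.
Qed.

Lemma nf_x r s t u v : exists i j, nf r s t u v * x = nf r.+1 s i (t + u) j.
Proof.
have [i [j E]] := yxs s.
exists (i + t), (j + v).
rewrite /nf -!mulgA (cXl _ ex) (mulgA (d ^+ u)) (cXl _ dx).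
rewrite !mulgA -(mulgA _ (c ^+ t) x) cxn !mulgA -(mulgA _ (y ^+ s) x) E !mulgA -expgSr.
rewrite -(mulgA _ (e ^+ j) (c ^+ t)) (commuteX2 _ _ ec) !mulgA.
rewrite -(mulgA _ (c ^+ i) (c ^+ t)) -expgD.
rewrite -(mulgA _ (e ^+ j) (d ^+ t)) (commuteX2 _ _ (commute_sym de)) !mulgA.
rewrite -(mulgA _ (e ^+ j) (d ^+ u)) (commuteX2 _ _ (commute_sym de)) !mulgA.
by rewrite -(mulgA _ (d ^+ t) (d ^+ u)) -expgD -(mulgA _ (e ^+ j) (e ^+ v)) -expgD.
Qed.

Lemma nf_all g : g \in <<[set x; y]>> -> exists r s t u v, g = nf r s t u v.
Proof.
case/gen_prodgP => n [f Hf ->].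
elim: n f Hf => [|n IH] f Hf.
  by exists 0, 0, 0, 0, 0; rewrite big_ord0 /nf !expg0 !mulg1.
rewrite big_ord_recr /=.
have [r [s [t [u [v ->]]]]] := IH (fun i => f (widen_ord (leqnSn n) i)) (fun i => Hf _).
have := Hf ord_max; rewrite !inE => /orP[]/eqP->.
  by have [i [j ->]] := nf_x r s t u v; exists r.+1, s, i, (t + u), j.
by rewrite nf_y; exists r, s.+1, t, u, (t + v).
Qed.

End Coll.

Lemma pow2_gt1 n : (0 < n)%N -> (1 < 2 ^ n)%N.
Proof. by move=> n0; rewrite -{1}(expn0 2) ltn_exp2l. Qed.

Lemma dvd_bin2 k n : (k < n)%N -> (2 ^ k %| 'C(2 ^ n, 2))%N.
Proof.
case: n => // n kn; rewrite bin2 expnS -mulnA mul2n doubleK.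
by apply: dvdn_mulr; apply: dvdn_exp2l.
Qed.

Theorem theorem5p4 (gT : finGroupType) (G : {group gT}) (a b : gT)
    (alpha beta gamma : nat) :
  (beta <= alpha)%N -> (1 <= beta)%N ->
  (1 <= gamma)%N -> (gamma < beta)%N ->
  is_nil3_product G a b (2 ^ alpha) (2 ^ beta) ->
  let N := <<[set [~ a, b, a] ^+ (2 ^ gamma); [~ a, b, b] ^+ (2 ^ gamma)]>> in
  let w := fun r s t u v : nat =>
    coset N (a ^+ r * b ^+ s * [~ a, b] ^+ t * [~ a, b, a] ^+ u
             * [~ a, b, b] ^+ v) in
  (forall k, k \in G / N -> exists r s t u v, k = w r s t u v) /\
  (forall r s t u v r' s' t' u' v',
     w r s t u v = w r' s' t' u' v' <->
     [/\ r = r' %[mod 2 ^ alpha], s = s' %[mod 2 ^ beta],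
         t = t' %[mod 2 ^ beta], u = u' %[mod 2 ^ gamma]
       & v = v' %[mod 2 ^ gamma]]).
Proof.
move=> hba hb1 hg1 hgb [GE aP bP L4 univ] N w.
have hP : (1 < 2 ^ alpha)%N := pow2_gt1 (leq_trans hb1 hba).
have hQ : (1 < 2 ^ beta)%N := pow2_gt1 hb1.
have hR : (1 < 2 ^ gamma)%N := pow2_gt1 hg1.
have RQ : (2 ^ gamma %| 2 ^ beta)%N := dvdn_exp2l 2 (ltnW hgb).
have QP : (2 ^ beta %| 2 ^ alpha)%N := dvdn_exp2l 2 hba.
have RbP : (2 ^ gamma %| 'C(2 ^ alpha, 2))%N := dvd_bin2 (leq_trans hgb hba).
have RbQ : (2 ^ gamma %| 'C(2 ^ beta, 2))%N := dvd_bin2 hgb.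
have aG : a \in G by rewrite GE mem_gen // !inE eqxx.
have bG : b \in G by rewrite GE mem_gen // !inE eqxx orbT.
have cL3 : 'L_3(G) \subset 'C(G) by apply/commG1P; rewrite -lcnSn L4.
have L3G z : z \in 'L_3(G) -> forall g, g \in G -> commute z g.
  by move=> zL; apply/centP; apply: (subsetP cL3).
have dL3 : [~ a, b, a] \in 'L_3(G).
  by rewrite lcnSn lcnSn lcn1; apply: mem_commg => //; apply: mem_commg.
have eL3 : [~ a, b, b] \in 'L_3(G).
  by rewrite lcnSn lcnSn lcn1; apply: mem_commg => //; apply: mem_commg.
have dx := L3G _ dL3 _ aG; have dy := L3G _ dL3 _ bG.
have ex := L3G _ eL3 _ aG; have ey := L3G _ eL3 _ bG.
have nfG r s t u v : nf a b r s t u v \in G.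
  by rewrite /nf !groupM ?groupX ?groupR.
have NC : N \subset 'C(G).
  apply: gen2_sub; apply: groupX; apply: (subsetP cL3) => //.
have nNG : G \subset 'N(N) by rewrite cents_norm // centsC.
have NG : N \subset G.
  apply: gen2_sub; apply: groupX; rewrite ?groupR //.
split.
  move=> k /morphimP [g gN gG ->].
  have gG' : g \in <<[set a; b]>> by rewrite -GE.
  have [r [s [t [u [v ->]]]]] := nf_all dx dy ex ey gG'.
  by exists r, s, t, u, v.
move=> r s t u v r' s' t' u' v'; split.
  move=> Hw.
  pose Xp := X (2 ^ alpha) hQ hR RQ.
  pose Yp := Y (2 ^ alpha) (2 ^ beta) (2 ^ gamma).
  have cls : 'L_4(<<[set Xp; Yp]>>) = 1.
    by apply: class3; rewrite /Xp /Yp XY_comm ?CX_comm ?CY_comm;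
      first [exact: DX | exact: DY | exact: EX | exact: EY | done].
  have [f [fa fb]] := univ _ Xp Yp (XP hP hQ hR RQ QP RbP) (YQ _ hQ hR RQ RbQ) cls.
  have Nker : N \subset 'ker f.
    apply: gen2_sub; apply/kerP; rewrite ?groupX ?groupR // morphX ?groupR //.
      by rewrite !morphR ?groupR // fa fb /Xp /Yp XY_comm CX_comm DR.
    by rewrite !morphR ?groupR // fa fb /Xp /Yp XY_comm CY_comm; try exact: (ER (2 ^ alpha) (2 ^ beta) hR).
  have fnf r1 s1 t1 u1 v1 : f (nf a b r1 s1 t1 u1 v1) =
      (Xp ^+ r1 * Yp ^+ s1 * Cp (2 ^ alpha) (2 ^ beta) (2 ^ gamma) ^+ t1 *
       Dp (2 ^ alpha) (2 ^ beta) (2 ^ gamma) ^+ u1 *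
       Ep (2 ^ alpha) (2 ^ beta) (2 ^ gamma) ^+ v1).
    rewrite /nf !morphM ?groupM ?groupX ?groupR // !morphX ?groupR //.
    by rewrite !morphR ?groupR // fa fb /Xp /Yp XY_comm CX_comm CY_comm.
  have inN : nf a b r s t u v * (nf a b r' s' t' u' v')^-1 \in N.
    apply: coset_idr; first by rewrite (subsetP nNG) // groupM ?groupV.
    rewrite morphM ?morphV ?groupV ?(subsetP nNG) //.
    have Hw' : coset N (nf a b r s t u v) = coset N (nf a b r' s' t' u' v') := Hw.
    by rewrite /= Hw' mulgV.
  have := mker (subsetP Nker _ inN).
  rewrite morphM ?morphV ?groupV // => /eqP; rewrite -eq_mulgV1 !fnf => /eqP E.
  have := congr1 (fun h : {perm T (2 ^ alpha) (2 ^ beta) (2 ^ gamma)} => h (p0 (2 ^ alpha) (2 ^ beta) (2 ^ gamma))) E.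
  rewrite /= !nf_eval => -[E1 E2 E3 E4 E5 _].
  by split; apply: Zp_inj.
case=> H1 H2 H3 H4 H5.
have inNN x : x \in G -> x \in 'N(N) := subsetP nNG x.
have qnf r1 s1 t1 u1 v1 : w r1 s1 t1 u1 v1 = nf (coset N a) (coset N b) r1 s1 t1 u1 v1.
  rewrite /w /nf !morphM ?inNN ?groupM ?groupX ?groupR // !morphX ?inNN ?groupR //.
  by rewrite !morphR ?inNN ?groupR.
have qaP : coset N a ^+ (2 ^ alpha) = 1 by rewrite -morphX ?inNN // aP morph1.
have qbP : coset N b ^+ (2 ^ beta) = 1 by rewrite -morphX ?inNN // bP morph1.
have cQN : [~ a, b] ^+ (2 ^ beta) \in N.
  have h := comm_xyn ex ey (2 ^ beta); rewrite bP commg1 in h.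
  have eN : [~ a, b, b] ^+ 'C(2 ^ beta, 2) \in N.
    case/dvdnP: RbQ => k ->; rewrite mulnC expgM groupX //.
    by rewrite mem_gen // !inE eqxx orbT.
  by rewrite -(groupMr _ eN) -h group1.
have qcP : [~ coset N a, coset N b] ^+ (2 ^ beta) = 1.
  by rewrite -morphR ?inNN // -morphX ?inNN ?groupR //= coset_id.
have qdP : [~ coset N a, coset N b, coset N a] ^+ (2 ^ gamma) = 1.
  rewrite -!morphR ?inNN ?groupR // -morphX ?inNN ?groupR //= coset_id //.
  by rewrite mem_gen // !inE eqxx.
have qeP : [~ coset N a, coset N b, coset N b] ^+ (2 ^ gamma) = 1.
  rewrite -!morphR ?inNN ?groupR // -morphX ?inNN ?groupR //= coset_id //.
  by rewrite mem_gen // !inE eqxx orbT.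
rewrite !qnf /nf; congr (_ * _ * _ * _ * _).
- by rewrite -(expg_mod r qaP) H1 (expg_mod r' qaP).
- by rewrite -(expg_mod s qbP) H2 (expg_mod s' qbP).
- by rewrite -(expg_mod t qcP) H3 (expg_mod t' qcP).
- by rewrite -(expg_mod u qdP) H4 (expg_mod u' qdP).
by rewrite -(expg_mod v qeP) H5 (expg_mod v' qeP).
Qed.
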